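(* Let $K$ be a global field of positive characteristic, $\nu$ a place of $K$, $\mathbb{G}$ a $K$-group, $G=\mathbb{G}(K_\nu)$, $\Gamma$ a discrete subgroup (an arithmetic lattice commensurable with $\mathbb{G}(\mathcal{O}_{\{\nu\}})$), $\mathbb{F}$ a connected $K$-closed subgroup of $\mathbb{G}$ without $K$-rational characters, $F=\mathbb{F}(K_\nu)$ and $\Gamma_F=\Gamma\cap N_G(F)$. Let $D\subset G$ be compact and let $\mathcal{Y}$ be the set of $(F,\Gamma)$-self-intersection points of $D$. Then for every compact subset $D'\subset D\setminus\mathcal{Y}$ there is an open neighbourhood $\Omega$ of $D'$ in $G$ that has no $(F,\Gamma)$-self-intersection points, i.e. there are no $g\in\Omega$ and $\gamma\in\Gamma\setminus\Gamma_F$ with $g\gamma\in\Omega$.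
   Context: For $A\subset G$, a point $x\in A$ is an $(F,\Gamma)$-self-intersection point of $A$ if there exists $\gamma\in\Gamma\setminus\Gamma_F$ with $x\gamma\in A$. *)

(* Defs.v *)
From HB Require Import structures.
From mathcomp Require Import all_boot.
From mathcomp Require Import all_classical topology.

Set Implicit Arguments.
Unset Strict Implicit.
Unset Printing Implicit Defensive.

Local Open Scope classical_set_scope.
Local Open Scope group_scope.

HB.mixin Record isTopologicalGroup G of Group G & Topological G := {
  mul_continuous : continuous (fun p : G * G => p.1 * p.2);
  inv_continuous : continuous (fun x : G => x^-1)
}.

#[short(type="topGroupType")]
HB.structure Definition TopologicalGroup :=
  {G of isTopologicalGroup G & Group G & Topological G}.

Definition is_subgroup (G : groupType) (H : set G) : Prop :=
  H 1 /\ (forall x y, H x -> H y -> H (x * y)) /\ (forall x, H x -> H x^-1).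

Definition discrete_subset (T : topologicalType) (H : set T) : Prop :=
  forall h, H h -> exists U : set T, [/\ open U, U h & U `&` H = [set h]].

Definition normaliser (G : groupType) (F : set G) : set G :=
  [set g | forall x, F (g^-1 * x * g) <-> F x].

Definition Gamma_F (G : groupType) (F Gamma : set G) : set G :=
  Gamma `&` normaliser F.

Definition self_intersection_point (G : groupType) (F Gamma A : set G) (x : G)
  : Prop :=
  A x /\ exists2 gamma, (Gamma `\` Gamma_F F Gamma) gamma & A (x * gamma).

Definition self_intersection_points (G : groupType) (F Gamma A : set G)
  : set G := [set x | self_intersection_point F Gamma A x].

(* Main.v *)
Require Import Defs.
From HB Require Import structures.
From mathcomp Require Import all_boot.
From mathcomp Require Import all_classical topology.
Local Open Scope classical_set_scope.
Local Open Scope group_scope.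

Section TG.
Variable G : topGroupType.

Lemma mul_cvg (T : Type) (F : set_system T) (FF : Filter F) (f g : T -> G) a b :
  f @ F --> a -> g @ F --> b -> (fun x => f x * g x) @ F --> a * b.
Proof.
move=> fa gb; apply: (@continuous2_cvg _ _ _ _ F FF f g (fun x y : G => x * y) a b) => //.
exact: (@mul_continuous G (a, b)).
Qed.

Lemma inv_cvg (T : Type) (F : set_system T) (FF : Filter F) (f : T -> G) a :
  f @ F --> a -> (fun x => (f x)^-1) @ F --> a^-1.
Proof.
move=> fa; exact: (@continuous_cvg _ _ _ F FF f (fun x : G => x^-1) a (@inv_continuous G a) fa).
Qed.

Definition phi (q : (G * G) * (G * G)) : G :=
  q.2.1^-1 * q.1.1^-1 * (q.1.2 * q.2.2).

Lemma phi_cont : continuous phi.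
Proof.
move=> q; rewrite /phi.
apply: mul_cvg; [apply: mul_cvg|apply: mul_cvg]; try apply: inv_cvg.
- apply: (cvg_comp _ _ cvg_snd); exact: cvg_fst.
- apply: (cvg_comp _ _ cvg_fst); exact: cvg_fst.
- apply: (cvg_comp _ _ cvg_fst); exact: cvg_snd.
- apply: (cvg_comp _ _ cvg_snd); exact: cvg_snd.
Qed.


Lemma loc_claim (Gamma : set G) (Gamma_subgroup : is_subgroup Gamma)
  (Gamma_discrete : discrete_subset Gamma) (hG : hausdorff_space G)
  (F D D' : set G) :
  D' `<=` D `\` self_intersection_points F Gamma D ->
  forall a b, D' a -> D' b ->
  \forall z \near a^-1 * b, ~ (Gamma `\` Gamma_F F Gamma) z.
Proof.
move=> sub a b Da Db; set c := a^-1 * b.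
have [G1 [GM GI]] := Gamma_subgroup.
have [U [oU U1 UG]] := Gamma_discrete 1 G1.
have cc : (fun p : G * G => p.1^-1 * p.2) @ nbhs (c, c) --> c^-1 * c.
  by apply: mul_cvg; [apply: inv_cvg; exact: cvg_fst| exact: cvg_snd].
rewrite mulVg in cc.
have /cc : nbhs (1 : G) U by exact: open_nbhs_nbhs.
case=> [[A B]] /= [nA nB] sAB.
have nN : nbhs c (A `&` B) by exact: filterI.
have key : forall x z, A x -> B z -> Gamma x -> Gamma z -> z = x.
  move=> x z Ax Bz Gx Gz.
  have : (U `&` Gamma) (x^-1 * z) by split; [exact: (sAB (x, z))|apply: GM => //; exact: GI].
  rewrite UG => /= e; by rewrite -(mulVKg x z) e mulg1.
have [[g0 [[Ag0 Bg0] Bad0]]|nob] := pselect (exists g0, (A `&` B) g0 /\ (Gamma `\` Gamma_F F Gamma) g0); last first.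
  apply: filterS nN => z Nz Bz; apply: nob; by exists z.
have neq : g0 != c.
  apply/eqP => e; have [Da' nsi] := sub a Da; apply: nsi; split => //.
  exists g0 => //; rewrite e /c mulVKg; exact: (sub b Db).1.
have [[A' [nA' nA'g]]|noA] := pselect (exists A', nbhs c A' /\ ~ A' g0); last first.
  exfalso; move/eqP: neq; apply; apply: hG => P Q nP nQ.
  exists g0; split; first exact: (nbhs_singleton nP).
  apply: contrapT => nQ0; apply: noA; by exists Q.
apply: filterS (filterI nN nA') => z [[Az Bz] A'z] [Gz nGFz].
have e := key g0 z Ag0 Bz Bad0.1 Gz.
by apply: nA'g; rewrite -e.
Qed.

End TG.

Theorem proposition5p9 (G : topGroupType)
  (G_hausdorff : hausdorff_space G) (G_lc : locally_compact [set: G])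
  (Gamma : set G) (Gamma_subgroup : is_subgroup Gamma)
  (Gamma_discrete : discrete_subset Gamma)
  (F : set G) (F_subgroup : is_subgroup F) (F_closed : closed F)
  (D : set G) (D_compact : compact D) :
  forall D' : set G, compact D' ->
    D' `<=` D `\` self_intersection_points F Gamma D ->
    exists Omega : set G,
      [/\ open Omega, D' `<=` Omega &
        forall g gamma, Omega g -> (Gamma `\` Gamma_F F Gamma) gamma ->
          ~ Omega (g * gamma)].
Proof.
move=> D' cD' sub.
set Bad := Gamma `\` Gamma_F F Gamma.
have loc := @loc_claim G Gamma Gamma_subgroup Gamma_discrete G_hausdorff F D D' sub.
have /compact_near_coveringP cov := compact_setX cD' cD'.
have := cov (G * G)%type (nbhs ((1, 1) : G * G))
  (fun w ab => ~ Bad (phi G (ab, w))) _.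
case.
- move=> [a b] [/= Da Db].
  have := loc a b Da Db.
  have -> : a^-1 * b = phi G ((a, b), ((1, 1) : G * G)).
    by rewrite /phi /= invg1 mul1g mulg1.
  move=> /(@phi_cont G) H; exact: H.
move=> [A B] /= [nA nB] sAB.
set W := (A `&` B)°.
have oW : open W by exact: open_interior.
have W1 : W 1 by rewrite /W /interior; exact: filterI.
exists [set x | exists2 a, D' a & W (a^-1 * x)]; split.
- rewrite openE => x [a Da Wx].
  have cx : (fun y : G => a^-1 * y) @ nbhs x --> a^-1 * x.
    by apply: mul_cvg; [exact: cvg_cst| exact: cvg_id].
  have /cx nW : nbhs (a^-1 * x) W by apply: open_nbhs_nbhs; split.
  have nW' : nbhs x [set y | W (a^-1 * y)] := nW.
  by apply: (filterS _ nW') => y Wy; exists a.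
- by move=> x Dx; exists x => //; rewrite mulVg.
move=> g gamma [a Da Wa] Bg [b Db Wb].
have wAB : (A `*` B) (a^-1 * g, b^-1 * (g * gamma)).
  have [Ag _] := interior_subset Wa; have [_ Bg'] := interior_subset Wb.
  by split.
have := sAB _ wAB (a, b) (conj Da Db); apply.
rewrite /phi /= invgM invgK.
by rewrite mulgK (mulVKg b) mulKg.
Qed.
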